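(* Let $p\ge1$, $k\ge1$, $r\in\{0,\dots,p-1\}$, $\alpha\in\mathbb R^{p\times r}$ with $\operatorname{rank}\alpha=r$, $\bar b<\infty$ and $\bar\rho<1$. Let $\mathcal B\subset\mathbb R^{kp\times[p(k-1)+r]}$ be closed with $\max_{\boldsymbol\beta\in\mathcal B}\|\boldsymbol\beta\|\le\bar b$ and $\rho_{JSR}(\{I_{p(k-1)+r}+\boldsymbol\beta^\top\boldsymbol\alpha:\boldsymbol\beta\in\mathcal B\})\le\bar\rho$. Then for every $\boldsymbol\beta\in\mathcal B$ the $kp\times kp$ matrix $\begin{bmatrix}\boldsymbol\alpha_\perp^\top\\\boldsymbol\beta^\top\end{bmatrix}$ is invertible, and $$\sup_{\boldsymbol\beta\in\mathcal B}\left\|\begin{bmatrix}\boldsymbol\alpha_\perp^\top\\\boldsymbol\beta^\top\end{bmatrix}^{-1}\right\|<\infty.$$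
   Context: $D\in\mathbb R^{p(k-1)\times p(k-1)}$ has $-I_p$ diagonal blocks, $I_p$ blocks immediately above the diagonal, zeros elsewhere (blocks empty when $k=1$); $E=(I_p,0_{p\times p(k-2)})^\top\in\mathbb R^{p(k-1)\times p}$. $\alpha_\perp$ is a $p\times(p-r)$ matrix of rank $p-r$ with $\alpha_\perp^\top\alpha=0$. $\boldsymbol\alpha=\begin{bmatrix}\alpha & E^\top\\ 0 & I_{p(k-1)}\end{bmatrix}\in\mathbb R^{kp\times[r+p(k-1)]}$ and $\boldsymbol\alpha_\perp=\begin{bmatrix}I_p\\-E\end{bmatrix}\alpha_\perp\in\mathbb R^{kp\times(p-r)}$. Joint spectral radius: $\rho_{JSR}(\mathcal A)=\limsup_{t}\sup\{\rho(M_1\cdots M_t)^{1/t}:M_s\in\mathcal A\}$, $\rho$ the spectral radius. Matrix norms are operator norms induced by the Euclidean norm. *)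

(* Defs.v *)
From HB Require Import structures.
From mathcomp Require Import all_boot all_order all_algebra.
From mathcomp Require Import all_classical all_reals all_analysis.
From mathcomp.real_closed Require Import complex.
Set Implicit Arguments. Unset Strict Implicit. Unset Printing Implicit Defensive.
Import Order.TTheory GRing.Theory Num.Theory.
Local Open Scope classical_set_scope.
Local Open Scope ring_scope.

Section Defs.
Variable R : realType.

Definition vnorm n (x : 'cV[R]_n) : R := Num.sqrt (\sum_i (x i ord0) ^+ 2).

Definition opnorm m n (A : 'M[R]_(m, n)) : R :=
  sup [set vnorm (A *m x) | x in [set x : 'cV[R]_n | vnorm x <= 1]].

Definition specrad n (A : 'M[R]_n) : R :=
  sup [set complex.Re `|z| | z in
        [set z : R[i] | eigenvalue (map_mx (fun x : R => (x%:C)%C) A) z]].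

Definition mxprodseq n (s : seq 'M[R]_n) : 'M[R]_n :=
  foldr (fun M acc => M *m acc) 1%:M s.

(* joint spectral radius:
   limsup_t sup { rho(M_1 ... M_t)^(1/t) : M_s in A }   (t = u.+1 >= 1) *)
Definition jsr n (A : set 'M[R]_n) : \bar R :=
  limn_esup (fun u : nat =>
    ereal_sup [set ((specrad (mxprodseq s)) `^ ((u.+1)%:R^-1))%:E
              | s in [set s : seq 'M[R]_n | size s = u.+1 /\ all (fun M => M \in A) s]]).

Definition Emx (p k : nat) : 'M[R]_(p * (k - 1), p) :=
  \matrix_(i, j) ((i : nat) == (j : nat))%:R.

(* bold alpha = [alpha E^T; 0 I] in R^{kp x (r + p(k-1))}, kp written p + p(k-1) *)
Definition balpha (p k r : nat) (alpha : 'M[R]_(p, r)) :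
    'M[R]_(p + p * (k - 1), r + p * (k - 1)) :=
  block_mx alpha (Emx p k)^T 0 1%:M.

Definition balpha_perp (p k r : nat) (alpha_perp : 'M[R]_(p, p - r)) :
    'M[R]_(p + p * (k - 1), p - r) :=
  col_mx 1%:M (- Emx p k) *m alpha_perp.

(* closedness of a set of real matrices, for the (entrywise/product = norm)
   topology of R^{m x n}; R^o is R itself seen with its canonical topology *)
Definition mxclosed m n (B : set 'M[R]_(m, n)) : Prop :=
  closed (B : set 'M[R^o]_(m, n)).

End Defs.

(* Main.v *)
Require Import Defs.
From HB Require Import structures.
From mathcomp Require Import all_boot all_order all_algebra.
From mathcomp Require Import all_classical all_reals all_analysis.
From mathcomp.real_closed Require Import complex.
From mathcomp Require Import fingroup perm.
Import Order.TTheory GRing.Theory Num.Theory.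
Local Open Scope classical_set_scope.
Local Open Scope ring_scope.

Set Implicit Arguments. Unset Strict Implicit. Unset Printing Implicit Defensive.

Section Msum.
Variable C : numDomainType.

Definition msum a b (A : 'M[C]_(a, b)) : C := \sum_i \sum_j `|A i j|.

Lemma msum_ge0 a b (A : 'M[C]_(a, b)) : 0 <= msum A.
Proof. by apply: sumr_ge0 => i _; apply: sumr_ge0. Qed.

Lemma msum_entry a b (A : 'M[C]_(a, b)) i j : `|A i j| <= msum A.
Proof.
rewrite /msum (bigD1 i) //= (bigD1 j) //= -addrA lerDl addr_ge0 //.
  by apply: sumr_ge0.
by apply: sumr_ge0 => l _; apply: sumr_ge0.
Qed.

Lemma msum_le a b (A : 'M[C]_(a, b)) K : (forall i j, `|A i j| <= K) ->
  msum A <= (a * b)%:R * K.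
Proof.
move=> h; rewrite /msum.
apply: (@le_trans _ _ (\sum_(i < a) \sum_(j < b) K)).
  by apply: ler_sum => i _; apply: ler_sum => j _.
have e : forall (x : C) n, \sum_(i < n) x = x *+ n.
  by move=> x n; rewrite sumr_const card_ord.
under eq_bigr do rewrite e.
by rewrite e -mulrnA mulr_natl mulnC.
Qed.

Lemma msumM a b c (A : 'M[C]_(a, b)) (B : 'M[C]_(b, c)) :
  msum (A *m B) <= msum A * msum B.
Proof.
rewrite /msum mulr_suml.
apply: ler_sum => i _.
apply: (@le_trans _ _ (\sum_j \sum_l `|A i l| * `|B l j|)).
  apply: ler_sum => j _; rewrite mxE.
  by apply: le_trans (ler_norm_sum _ _ _) _; apply: ler_sum => l _; rewrite normrM.
rewrite exchange_big /= mulr_suml; apply: ler_sum => l _.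
rewrite -mulr_sumr; apply: ler_wpM2l; first exact: normr_ge0.
rewrite (bigD1 l) //= lerDl; apply: sumr_ge0 => l' _; apply: sumr_ge0 => *; exact: normr_ge0.
Qed.

Lemma msumD a b (A B : 'M[C]_(a, b)) : msum (A + B) <= msum A + msum B.
Proof.
rewrite /msum -big_split /=; apply: ler_sum => i _.
rewrite -big_split /=; apply: ler_sum => j _; rewrite mxE; exact: ler_normD.
Qed.

Lemma msumN a b (A : 'M[C]_(a, b)) : msum (- A) = msum A.
Proof. by apply: eq_bigr => i _; apply: eq_bigr => j _; rewrite mxE normrN. Qed.

Lemma msumZ a b (A : 'M[C]_(a, b)) x : msum (x *: A) = `|x| * msum A.
Proof.
rewrite /msum mulr_sumr; apply: eq_bigr => i _; rewrite mulr_sumr.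
by apply: eq_bigr => j _; rewrite mxE normrM.
Qed.

Lemma msum_tr a b (A : 'M[C]_(a, b)) : msum A^T = msum A.
Proof.
rewrite /msum exchange_big /=; apply: eq_bigr => i _; apply: eq_bigr => j _.
by rewrite mxE.
Qed.

Lemma msum_row_mx a b1 b2 (A : 'M[C]_(a, b1)) (B : 'M[C]_(a, b2)) :
  msum (row_mx A B) = msum A + msum B.
Proof.
rewrite /msum -big_split /=; apply: eq_bigr => i _.
by rewrite big_split_ord /=; congr (_ + _); apply: eq_bigr => j _;
  rewrite ?row_mxEl ?row_mxEr.
Qed.

Lemma msum_col_mx a1 a2 b (A : 'M[C]_(a1, b)) (B : 'M[C]_(a2, b)) :
  msum (col_mx A B) = msum A + msum B.
Proof.
by rewrite -msum_tr tr_col_mx msum_row_mx !msum_tr.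
Qed.

Lemma msum1 n : msum (1%:M : 'M[C]_n) <= (n * n)%:R.
Proof.
rewrite -[X in _ <= X]mulr1; apply: msum_le => i j; rewrite mxE.
by case: (i == j); rewrite ?normr1 ?normr0.
Qed.

Lemma det_bound n (A : 'M[C]_n) K : (forall i j, `|A i j| <= K) ->
  `|\det A| <= (n`!)%:R * K ^+ n.
Proof.
move=> h; rewrite /determinant.
apply: le_trans (ler_norm_sum _ _ _) _.
apply: (@le_trans _ _ (\sum_(s : 'S_n) K ^+ n)); last first.
  by rewrite sumr_const card_Sn mulr_natl.
apply: ler_sum => s _; rewrite normrM normr_sign mul1r normr_prod.
apply: (@le_trans _ _ (\prod_(i < n) K)); first by apply: ler_prod => i _; rewrite normr_ge0 h.
by rewrite prodr_const card_ord.
Qed.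

End Msum.


Lemma adj_bound (C : numDomainType) n (A : 'M[C]_n) K : 0 <= K ->
  (forall i j, `|A i j| <= K) ->
  forall i j, `|\adj A i j| <= (n.-1`!)%:R * K ^+ n.-1.
Proof.
move=> K0 h i j; rewrite mxE /cofactor normrM normr_sign mul1r.
by apply: det_bound => k l; rewrite !mxE.
Qed.

Lemma inv_bound (C : numFieldType) n (A : 'M[C]_n) K d : 0 <= K -> 0 < d ->
  (forall i j, `|A i j| <= K) -> d <= `|\det A| ->
  A \in unitmx /\ msum (invmx A) <= d^-1 * ((n * n)%:R * ((n.-1`!)%:R * K ^+ n.-1)).
Proof.
move=> K0 d0 h hd.
have dA : \det A != 0 by rewrite -normr_gt0; apply: lt_le_trans hd.
have uA : A \in unitmx by rewrite unitmxE unitfE.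
split => //; rewrite /invmx uA msumZ normrV ?unitfE //.
apply: ler_pM.
- by rewrite invr_ge0.
- exact: msum_ge0.
- by rewrite lef_pV2 // posrE; apply: lt_le_trans hd.
apply: msum_le => i j; exact: adj_bound.
Qed.


Section Norms.
Variable R : realType.

Lemma entry_le_vnorm n (x : 'cV[R]_n) i : `|x i ord0| <= vnorm x.
Proof.
rewrite /vnorm -sqrtr_sqr ler_sqrt; last by apply: sumr_ge0 => *; exact: sqr_ge0.
rewrite (bigD1 i) //= lerDl; apply: sumr_ge0 => *; exact: sqr_ge0.
Qed.

Lemma vnorm_le_msum n (x : 'cV[R]_n) : vnorm x <= msum x.
Proof.
have -> : msum x = \sum_i `|x i ord0|.
  by apply: eq_bigr => i _; rewrite big_ord1.
have s0 : 0 <= \sum_i `|x i ord0| by apply: sumr_ge0 => *; exact: normr_ge0.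
rewrite /vnorm -(ger0_norm s0) -sqrtr_sqr ler_sqrt; last exact: sqr_ge0.
rewrite expr2 mulr_suml; apply: ler_sum => i _.
rewrite -real_normK ?num_real // expr2; apply: ler_wpM2l => //.
idtac.
rewrite (bigD1 i) //= lerDl; apply: sumr_ge0 => *; exact: normr_ge0.
Qed.

Lemma msum_unit_ball n (x : 'cV[R]_n) : vnorm x <= 1 -> msum x <= (n * 1)%:R * 1.
Proof.
move=> h; apply: msum_le => i j; rewrite (ord1 j).
exact: le_trans (entry_le_vnorm x i) h.
Qed.

Lemma opnorm_ub m n (A : 'M[R]_(m, n)) :
  ubound [set vnorm (A *m x) | x in [set x : 'cV[R]_n | vnorm x <= 1]]
    (msum A * ((n * 1)%:R * 1)).
Proof.
move=> _ [x /= hx <-].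
apply: le_trans (vnorm_le_msum _) _.
apply: le_trans (msumM _ _) _.
apply: ler_wpM2l; first exact: msum_ge0.
exact: msum_unit_ball.
Qed.

Lemma opnorm_le_msum m n (A : 'M[R]_(m, n)) : opnorm A <= msum A * ((n * 1)%:R * 1).
Proof.
apply: ge_sup; last exact: opnorm_ub.
exists (vnorm (A *m 0)), 0 => //=.
apply: le_trans (vnorm_le_msum _) _.
apply: le_trans (msum_le (K := 0) _) _; last by rewrite mulr0.
by move=> i j; rewrite mxE normr0.
Qed.

Lemma entry_le_opnorm m n (A : 'M[R]_(m, n)) i j : `|A i j| <= opnorm A.
Proof.
have hub : has_ubound [set vnorm (A *m x) | x in [set x : 'cV[R]_n | vnorm x <= 1]].
  by eexists; exact: opnorm_ub.
apply: le_trans (ub_le_sup hub _); last first.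
  exists (delta_mx j ord0) => //=.
  rewrite /vnorm (bigD1 j) //= big1 ?addr0.
    by rewrite mxE !eqxx expr1n sqrtr1.
  by move=> l /negbTE hl; rewrite mxE hl expr0n.
rewrite -colE.
by have := entry_le_vnorm (col j A) i; rewrite mxE.
Qed.

End Norms.


Section Cx.
Variable R : realType.
Local Notation cx := (fun x : R => (x%:C)%C).

Lemma normC_re (z : R[i]) : `|z| = ((complex.Re `|z|)%:C)%C.
Proof. by rewrite normc_def. Qed.

Lemma msum_pos (C : numDomainType) a b (v : 'M[C]_(a, b)) : v != 0 -> 0 < msum v.
Proof.
move=> hv.
have [i [j hij]] : exists i j, v i j != 0.
  apply: contra_neqP hv => h; apply/matrixP => i j; rewrite mxE.
  by apply/eqP; rewrite -[_ == _]negbK; apply/negP => hn; apply: h; exists i, j.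
by apply: lt_le_trans (msum_entry v i j); rewrite normr_gt0.
Qed.

Lemma eig_le_msum n (X : 'M[R[i]]_n) z : eigenvalue X z -> `|z| <= msum X.
Proof.
move=> /eigenvalueP [v hv v0].
have p := msum_pos v0.
have e := msumZ v z; rewrite -hv in e.
rewrite -(ler_pM2r p) -e mulrC.
exact: msumM.
Qed.

Lemma eig_prod n (M : 'M[R]_n) z t : eigenvalue (map_mx cx M) z ->
  eigenvalue (map_mx cx (mxprodseq (nseq t M))) (z ^+ t).
Proof.
move=> /eigenvalueP [v hv v0]; apply/eigenvalueP; exists v => //.
elim: t => [|t IH].
  by rewrite /= expr0 scale1r; rewrite (map_mx1 (real_complex R)) mulmx1.
rewrite /= (map_mxM (real_complex R)) mulmxA hv -scalemxAl IH scalerA exprS.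
by [].
Qed.

Lemma specrad_ge n (P : 'M[R]_n) w : eigenvalue (map_mx cx P) w ->
  complex.Re `|w| <= specrad P.
Proof.
move=> hw; apply: ub_le_sup; last by exists w.
exists (complex.Re (msum (map_mx cx P))) => _ [y hy <-].
have := eig_le_msum hy; rewrite lecE => /andP[_]; done.
Qed.

Lemma key_eig n (S : set 'M[R]_n) rho M z : (jsr S <= rho%:E)%E -> S M ->
  eigenvalue (map_mx cx M) z -> complex.Re `|z| <= rho.
Proof.
move=> hj SM hz.
set c := complex.Re `|z|.
have c0 : 0 <= c by rewrite /c normc_def /= sqrtr_ge0.
rewrite -lee_fin; apply: le_trans hj.
rewrite /jsr limn_esup_lim; apply: lime_ge; first exact: is_cvg_esups.
apply: nearW => u.
set v := (fun u : nat => _).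
apply: (@le_trans _ _ (v u)); last first.
  by apply: ereal_sup_ubound; exists u => /=.
apply: (@le_trans _ _ ((specrad (mxprodseq (nseq u.+1 M)) `^ (u.+1%:R^-1))%:E)); last first.
  apply: ereal_sup_ubound; exists (nseq u.+1 M) => //.
  split; first by rewrite size_nseq.
  by rewrite all_nseq; apply/orP; right; apply: mem_set.
rewrite lee_fin.
set k := u.+1.
have hk : complex.Re `|z ^+ k| = c ^+ k.
  by rewrite normrX normC_re -rmorphXn.
have hs := specrad_ge (eig_prod k hz); rewrite hk in hs.
have ck : c = (c ^+ k) `^ (k%:R^-1).
  rewrite -powR_mulrn // -powRrM mulfV ?powRr1 //.
  by rewrite pnatr_eq0.
rewrite [X in X <= _]ck; apply: ge0_ler_powR => //.
- by rewrite nnegrE exprn_ge0.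
- by rewrite nnegrE; apply: le_trans hs; rewrite exprn_ge0.
Qed.

End Cx.


Section Det.
Variable R : realType.
Local Notation cx := (fun x : R => (x%:C)%C).

Lemma normC_real (x : R) : `|(x%:C)%C| = (`|x|%:C)%C.
Proof. by rewrite normc_def /= expr0n addr0 sqrtr_sqr. Qed.

Lemma prod_lb (C : numDomainType) (rs : seq C) c : 0 <= c ->
  (forall z, z \in rs -> c <= `|z|) -> c ^+ size rs <= \prod_(z <- rs) `|z|.
Proof.
move=> c0; elim: rs => [|a rs IH] h; first by rewrite big_nil expr0.
rewrite big_cons /= exprS; apply: ler_pM => //.
- by apply: exprn_ge0.
- by apply: h; rewrite inE eqxx.
by apply: IH => z hz; apply: h; rewrite inE hz orbT.
Qed.

Lemma det_lb n (G : 'M[R]_n) rho : rho < 1 ->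
  (forall z, eigenvalue (map_mx cx (1%:M + G)) z -> complex.Re `|z| <= rho) ->
  (1 - rho) ^+ n <= `|\det G|.
Proof.
move=> hr heig.
set Gc := map_mx cx G.
have [rs e] := closed_field_poly_normal (char_poly Gc).
rewrite (monicP (char_poly_monic Gc)) scale1r in e.
have sz : size rs = n.
  by have := size_char_poly Gc; rewrite e size_prod_XsubC => -[].
have hd : (char_poly Gc)`_0 = \prod_(z <- rs) (- z).
  rewrite e -horner_coef0 horner_prod; apply: eq_bigr => z _.
  by rewrite hornerXsubC sub0r.
have hdet : `|\det Gc| = \prod_(z <- rs) `|z|.
  have h := char_poly_det Gc; rewrite hd in h.
  have -> : `|\det Gc| = `|(-1) ^+ n * \det Gc| by rewrite normrM normr_sign mul1r.
  by rewrite -h normr_prod; apply: eq_bigr => z _; rewrite normrN.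
have hz : forall z, z \in rs -> ((1 - rho)%:C)%C <= `|z|.
  move=> z zin.
  have : eigenvalue Gc z by rewrite eigenvalue_root_char e root_prod_XsubC.
  move=> /eigenvalueP [v hv v0].
  have h1 : eigenvalue (map_mx cx (1%:M + G)) (1 + z).
    apply/eigenvalueP; exists v => //.
    rewrite (map_mxD (real_complex R)) (map_mx1 (real_complex R)).
    by rewrite mulmxDr mulmx1 -/Gc hv scalerDl scale1r.
  have := heig _ h1; rewrite -lecR -normC_re => h2.
  have h3 := ler_normD (1 + z) (- z); rewrite addrK normrN normr1 in h3.
  rewrite rmorphB /= rmorph1 lerBlDl; apply: le_trans h3 _.
  by apply: lerD => //.
have := prod_lb _ hz; rewrite -hdet sz.
rewrite /Gc (det_map_mx (real_complex R)) normC_real -rmorphXn lecR.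
move=> h; rewrite -lecR; apply: h; rewrite subr_ge0; exact: ltW.
Qed.

End Det.


Lemma sq_inv (C : comPzRingType) a b (e : a = b) (X : 'M[C]_(a, b)) (Y : 'M[C]_(b, a)) :
  X *m Y = 1%:M -> Y *m X = 1%:M.
Proof. by case: b / e in X Y *; exact: mulmx1C. Qed.

Lemma trN (C : pzRingType) a b (X : 'M[C]_(a, b)) : (- X)^T = - X^T.
Proof. by apply/matrixP => i j; rewrite !mxE. Qed.

Lemma PtA (R : realType) p k r (alpha : 'M[R]_(p, r)) (alpha_perp : 'M[R]_(p, p - r))
  (hperp_orth : alpha_perp^T *m alpha = 0) :
  (balpha_perp k alpha_perp)^T *m balpha k alpha = 0.
Proof.
rewrite /balpha_perp /balpha trmx_mul tr_col_mx trmx1 trN -mulmxA mul_row_block.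
rewrite mul1mx mulmx0 addr0 mulmx1 mul1mx subrr mul_mx_row hperp_orth mulmx0.
exact: row_mx0.
Qed.

Lemma PtZ (R : realType) p k r (alpha_perp : 'M[R]_(p, p - r))
  (hperp_rank : \rank alpha_perp = (p - r)%N) :
  (balpha_perp k alpha_perp)^T *m col_mx (pinvmx alpha_perp)^T 0 = 1%:M.
Proof.
have hf : row_full alpha_perp by rewrite /row_full hperp_rank.
have hV : pinvmx alpha_perp *m alpha_perp = 1%:M.
  by have := mulmxKpV (submx_full (1%:M : 'M[R]_(p - r)) hf); rewrite mul1mx.
rewrite /balpha_perp trmx_mul tr_col_mx trmx1 -mulmxA mul_row_col mul1mx mulmx0 addr0.
by rewrite -trmx_mul hV trmx1.
Qed.


Unset Implicit Arguments. Set Strict Implicit.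

Theorem lemmaB3 (R : realType) (p k r : nat) (hp : (1 <= p)%N) (hk : (1 <= k)%N)
    (hr : (r < p)%N)
    (alpha : 'M[R]_(p, r)) (halpha : \rank alpha = r)
    (alpha_perp : 'M[R]_(p, p - r)) (hperp_rank : \rank alpha_perp = (p - r)%N)
    (hperp_orth : alpha_perp^T *m alpha = 0)
    (bbar rhobar : R) (hrho : rhobar < 1)
    (B : set 'M[R]_(p + p * (k - 1), r + p * (k - 1)))
    (hBclosed : mxclosed B)
    (hBbound : forall beta, B beta -> opnorm beta <= bbar)
    (hjsr : (jsr [set (1%:M + beta^T *m balpha k alpha)%R | beta in B]
              <= rhobar%:E)%E) :
  exists C : R, forall beta, B beta ->
    exists N : 'M[R]_(p + p * (k - 1), (p - r) + (r + p * (k - 1))),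
      col_mx (balpha_perp k alpha_perp)^T beta^T *m N = 1%:M /\
      N *m col_mx (balpha_perp k alpha_perp)^T beta^T = 1%:M /\
      opnorm N <= C.
Proof.
have hPA := PtA k hperp_orth.
have hPZ := PtZ k hperp_rank.
pose Z := col_mx (pinvmx alpha_perp)^T (0 : 'M[R]_(p * (k - 1), p - r)).
pose Kb : R := ((p + p * (k - 1)) * (r + p * (k - 1)))%:R * bbar.
pose KG : R := Kb * msum (balpha k alpha).
pose n := (r + p * (k - 1))%N.
pose d : R := (1 - rhobar) ^+ n.
pose KI : R := d^-1 * ((n * n)%:R * ((n.-1`!)%:R * KG ^+ n.-1)).
pose C0 := ((((p + p * (k - 1)) * (p + p * (k - 1)))%:R
   + msum (balpha k alpha) * KI * Kb) * msum Z + msum (balpha k alpha) * KI)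
   * (((p - r + n) * 1)%:R * 1).
exists C0 => beta hB.
have hbeta : msum beta <= Kb.
  by apply: msum_le => i j; apply: le_trans (entry_le_opnorm _ _ _) (hBbound _ hB).
have Kb0 : 0 <= Kb := le_trans (msum_ge0 _) hbeta.
have hG : msum (beta^T *m balpha k alpha) <= KG.
  apply: le_trans (msumM _ _) _; rewrite msum_tr; apply: ler_wpM2r => //.
  exact: msum_ge0.
have KG0 : 0 <= KG := le_trans (msum_ge0 _) hG.
have hd : d <= `|\det (beta^T *m balpha k alpha)|.
  apply: det_lb => // z hz.
  by apply: (key_eig hjsr _ hz); exists beta.
have d0 : 0 < d by rewrite exprn_gt0 // subr_gt0.
have [uG hI] := inv_bound KG0 d0
   (fun i j => le_trans (msum_entry (beta^T *m balpha k alpha) i j) hG) hd.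
pose Y := balpha k alpha *m invmx (beta^T *m balpha k alpha).
pose X := (1%:M - balpha k alpha *m invmx (beta^T *m balpha k alpha) *m beta^T) *m Z.
exists (row_mx X Y).
have h1 : col_mx (balpha_perp k alpha_perp)^T beta^T *m row_mx X Y = 1%:M.
  rewrite mul_col_row (scalar_mx_block (p - r) n).
  congr block_mx.
  - by rewrite /X mulmxA mulmxBr mulmx1 !mulmxA hPA !mul0mx subr0.
  - by rewrite /Y mulmxA hPA mul0mx.
  - by rewrite /X mulmxA mulmxBr mulmx1 !mulmxA (mulmxV uG) mul1mx subrr mul0mx.
  - by rewrite /Y mulmxA (mulmxV uG).
have e : (p - r + (r + p * (k - 1)) = p + p * (k - 1))%N.
  by rewrite addnA subnK // ltnW.
split => //; split.
  have h2 := sq_inv e h1; exact h2.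
apply: le_trans (opnorm_le_msum _) _.
rewrite /C0; apply: ler_wpM2r; first by rewrite mulr1 ler0n.
have hA0 := msum_ge0 (balpha k alpha).
have hY : msum Y <= msum (balpha k alpha) * KI.
  by apply: le_trans (msumM _ _) _; apply: ler_wpM2l.
rewrite msum_row_mx; apply: lerD => //.
apply: le_trans (msumM _ _) _; apply: ler_wpM2r; first exact: msum_ge0.
apply: le_trans (msumD _ _) _; rewrite msumN; apply: lerD; first exact: msum1.
apply: le_trans (msumM _ _) _; rewrite msum_tr.
apply: ler_pM => //; exact: msum_ge0.
Qed.
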